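(* There exist constants $c>0$ and $m_0$ such that for every integer $m\ge m_0$ the following holds: every unlabeled tabletop rearrangement instance with $n=m^2$ congruent objects whose unlabeled dependency graph is isomorphic to the dependency grid $\mathcal{D}(m,2m)$ (by an isomorphism sending start vertices to start vertices) has $\mathrm{MRB}\ge c\,m=c\sqrt{n}$.
   Context: An unlabeled tabletop rearrangement instance consists of $n$ congruent, interchangeable objects in a bounded planar workspace with a feasible start arrangement and a feasible goal arrangement (poses in $SE(2)$; feasible means no two placed footprints have intersecting interiors). Its unlabeled dependency graph is bipartite, with a start vertex for each start pose and a goal vertex for each goal pose, and an edge between a start and a goal vertex iff footprints at those poses overlap. A plan with external buffers: each object is picked from its start pose exactly once and either placed at an unoccupied goal pose or into an external buffer (unlimited capacity), in the latter case later moved from the buffer to an unoccupied goal pose; an object may be placed at a goal pose only if it overlaps no object currently in the workspace; at the end all goal poses are occupied. Running buffers at a moment = number of objects in buffers; $\mathrm{MRB}$ = minimum over plans of the maximum number of running buffers. The dependency grid $\mathcal{D}(w,h)$ is the grid graph with vertices $v_{x,y}$, $1\le x\le w$ (columns), $1\le y\le h$ (rows), where $v_{x,y}$ and $v_{x',y'}$ are adjacent iff $|x-x'|+|y-y'|=1$; $v_{x,y}$ is a start vertex if $x+y$ is even and a goal vertex otherwise. *)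

(* Defs.v *)
From Stdlib Require Export Reals.
From mathcomp Require Import all_boot.
Set Implicit Arguments. Unset Strict Implicit. Unset Printing Implicit Defensive.

(* vertex v_{x,y} is represented by the pair (x,y), 1 <= x <= w, 1 <= y <= h *)
Definition in_grid (w h : nat) (v : nat * nat) : bool :=
  [&& 1 <= v.1, v.1 <= w, 1 <= v.2 & v.2 <= h].
Definition grid_start (v : nat * nat) : bool := ~~ odd (v.1 + v.2).
Definition grid_goal (v : nat * nat) : bool := odd (v.1 + v.2).
Definition grid_adj (v v' : nat * nat) : bool :=
  (maxn v.1 v'.1 - minn v.1 v'.1) + (maxn v.2 v'.2 - minn v.2 v'.2) == 1.

Section Rearrangement.
Variables (Pose : Type) (ov : Pose -> Pose -> Prop) (n : nat).
Variables (st gl : 'I_n -> Pose).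

Definition feasible (a : 'I_n -> Pose) : Prop :=
  forall i j, i != j -> ~ ov (a i) (a j).

(* the unlabeled dependency graph (start i -- goal j iff overlap) is isomorphic
   to D(w,h) by an isomorphism sending start vertices to start vertices *)
Definition dep_graph_iso_grid (w h : nat) : Prop :=
  exists (fs fg : 'I_n -> nat * nat),
    [/\ injective fs, injective fg,
        (forall i, in_grid w h (fs i) && grid_start (fs i)) &
        (forall j, in_grid w h (fg j) && grid_goal (fg j))] /\
    [/\ (forall v, in_grid w h v -> grid_start v -> exists i, fs i = v),
        (forall v, in_grid w h v -> grid_goal v -> exists j, fg j = v) &
        (forall i j, ov (st i) (gl j) <-> grid_adj (fs i) (fg j))].

Inductive action :=
| Direct of 'I_n & 'I_n   (* pick object at start s, place at goal g *)
| ToBuf of 'I_n           (* pick object at start s, put it into the buffer *)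
| FromBuf of 'I_n.        (* move an object from the buffer to goal g *)

(* state: start poses still holding their (unpicked) object, goal poses occupied,
   number of objects in the buffer (running buffers) *)
Record state := State { occ : {set 'I_n}; filled : {set 'I_n}; buf : nat }.

Definition init_state : state := State [set: 'I_n] set0 0.

Inductive step : state -> action -> state -> Prop :=
| step_direct (o f : {set 'I_n}) b s g :
    s \in o -> g \notin f ->
    (forall s', s' \in o -> s' != s -> ~ ov (st s') (gl g)) ->
    (forall g', g' \in f -> ~ ov (gl g') (gl g)) ->
    step (State o f b) (Direct s g) (State (o :\ s) (g |: f) b)
| step_tobuf (o f : {set 'I_n}) b s :
    s \in o ->
    step (State o f b) (ToBuf s) (State (o :\ s) f b.+1)
| step_frombuf (o f : {set 'I_n}) b g :
    0 < b -> g \notin f ->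
    (forall s', s' \in o -> ~ ov (st s') (gl g)) ->
    (forall g', g' \in f -> ~ ov (gl g') (gl g)) ->
    step (State o f b) (FromBuf g) (State o (g |: f) b.-1).

Inductive run : state -> seq action -> seq state -> Prop :=
| run_nil s : run s [::] [::]
| run_cons s a s' p tr : step s a s' -> run s' p tr -> run s (a :: p) (s' :: tr).

Definition max_running (tr : seq state) : nat := \max_(s <- tr) buf s.

Definition valid_plan (p : seq action) (tr : seq state) : Prop :=
  run init_state p tr /\ filled (last init_state tr) = [set: 'I_n].

(* MRB >= x : every valid plan reaches at least x running buffers at some moment
   (MRB is the minimum over valid plans of max_running) *)
Definition MRB_ge (x : R) : Prop :=
  forall p tr, valid_plan p tr -> Rle x (INR (max_running tr)).

End Rearrangement.

(* Main.v *)
Require Import Defs.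
From Stdlib Require Import Reals Lra.
From mathcomp Require Import all_boot zify.
Set Implicit Arguments. Unset Strict Implicit. Unset Printing Implicit Defensive.

Definition svert (x j : nat) : nat * nat :=
  (x.+1, if odd x then (2 * j).+2 else (2 * j).+1).
Definition gvert (x j : nat) : nat * nat :=
  (x.+1, if odd x then (2 * j).+1 else (2 * j).+2).

Lemma grid_adj_sym v w : grid_adj v w = grid_adj w v.
Proof. by rewrite /grid_adj maxnC minnC [maxn v.2 _]maxnC [minn v.2 _]minnC. Qed.

Lemma svert_grid M x j : x < M -> j < M ->
  in_grid M (2 * M) (svert x j) && grid_start (svert x j).
Proof.
rewrite /in_grid /grid_start /svert /= => hx hj.
case: (boolP (odd x)) => h /=; repeat (apply/andP; split); rewrite ?negbK; lia.
Qed.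

Lemma svert_inj x j x' j' : svert x j = svert x' j' -> x = x' /\ j = j'.
Proof.
rewrite /svert; case=> e; subst x'; case: (odd x) => -[] e; lia.
Qed.

Lemma start_svert M v : in_grid M (2 * M) v -> grid_start v ->
  [/\ v = svert v.1.-1 (v.2.-1)./2, v.1.-1 < M & (v.2.-1)./2 < M].
Proof.
case: v => x y; rewrite /in_grid /grid_start /svert /= => /and4P[h1 h2 h3 h4] hp.
split; try lia.
have -> : x = x.-1.+1 by lia.
rewrite -pred_Sn; case: (boolP (odd x.-1)) => h; congr pair; lia.
Qed.

Lemma goal_gvert M v : in_grid M (2 * M) v -> grid_goal v ->
  [/\ v = gvert v.1.-1 (v.2.-1)./2, v.1.-1 < M & (v.2.-1)./2 < M].
Proof.
case: v => x y; rewrite /in_grid /grid_goal /gvert /= => /and4P[h1 h2 h3 h4] hp.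
split; try lia.
have -> : x = x.-1.+1 by lia.
rewrite -pred_Sn; case: (boolP (odd x.-1)) => h; congr pair; lia.
Qed.

Lemma adj_same x j : grid_adj (svert x j) (gvert x j).
Proof. rewrite /grid_adj /svert /gvert /=; case: (odd x); apply/eqP; lia. Qed.

Lemma adj_right x j : grid_adj (gvert x j) (svert x.+1 j).
Proof. rewrite /grid_adj /svert /gvert /=; case: (boolP (odd x)) => h /=; rewrite ?h /=; apply/eqP; lia. Qed.

Lemma adj_left x j : grid_adj (gvert x.+1 j) (svert x j).
Proof. rewrite /grid_adj /svert /gvert /=; case: (boolP (odd x)) => h /=; rewrite ?h /=; apply/eqP; lia. Qed.

Lemma adj_up x j : ~~ odd x -> grid_adj (gvert x j) (svert x j.+1).
Proof. rewrite /grid_adj /svert /gvert /= => h; rewrite (negbTE h); apply/eqP; lia. Qed.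

Lemma adj_down x j : odd x -> grid_adj (gvert x j.+1) (svert x j).
Proof. rewrite /grid_adj /svert /gvert /= => h; rewrite h; apply/eqP; lia. Qed.

Lemma ivt (f : nat -> bool) a b : a <= b -> f a -> ~~ f b ->
  exists x, [/\ a <= x, x < b, f x & ~~ f x.+1].
Proof.
elim: b => [|b IH] hab fa fb.
  have e : a = 0 by lia.
  by subst a; rewrite fa in fb.
have hab' : a <= b.
  rewrite leq_eqVlt in hab; case/orP: hab => [/eqP e|]; [by subst a; rewrite fa in fb | lia].
case: (boolP (f b)) => fbb.
  by exists b; split.
have [x [h1 h2 h3 h4]] := IH hab' fa fbb.
exists x; split => //; lia.
Qed.

Lemma sum_odd n : \sum_(x < n) (odd x : nat) = n./2.
Proof. elim: n => [|n IH]; first by rewrite big_ord0. rewrite big_ord_recr /= IH; lia. Qed.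

Lemma sum_even n : \sum_(x < n) (~~ odd x : nat) = n.+1./2.
Proof.
elim: n => [|n IH]; first by rewrite big_ord0.
rewrite big_ord_recr /= IH; case: (boolP (odd n)) => h /=; lia.
Qed.

Section Comb.
Variable m' : nat.
Local Notation M := m'.+1.

Definition nbr (d d' : 'I_M * 'I_M) : bool :=
  grid_adj (gvert d.1 d.2) (svert d'.1 d'.2).

Lemma card_pairs (P : nat -> nat -> bool) :
  #|[set d : 'I_M * 'I_M | P d.1 d.2]| = \sum_(x < M) \sum_(j < M) (P x j : nat).
Proof.
rewrite pair_bigA /= -sum1_card big_mkcond /=; apply: eq_bigr => d _.
by rewrite inE; case: (P _ _).
Qed.

Lemma sum_ge1 (F : nat -> bool) x0 : x0 < M -> F x0 -> 1 <= \sum_(x < M) (F x : nat).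
Proof. move=> h hf. rewrite (bigD1 (Ordinal h)) //= hf. lia. Qed.

Lemma comb (T : {set 'I_M * 'I_M}) : #|T| = M * M./2 ->
  M./2 <= #|[set d in T | [exists d', nbr d d' && (d' \notin T)]]|.
Proof.
move=> hT.
pose t x j := ((inord x, inord j) : 'I_M * 'I_M) \in T.
pose badn x j := t x j && [|| (x.+1 < M) && ~~ t x.+1 j, (0 < x) && ~~ t x.-1 j,
   ~~ odd x && (j.+1 < M) && ~~ t x j.+1 | odd x && (0 < j) && ~~ t x j.-1].
pose B := \sum_(x < M) \sum_(j < M) (badn x j : nat).
have hB : B <= #|[set d in T | [exists d', nbr d d' && (d' \notin T)]]|.
  rewrite /B -card_pairs; apply: subset_leq_card; apply/subsetP => -[x j].
  rewrite !inE /= /badn /t !inord_val => /andP[-> hb] /=.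
  have hx := ltn_ord x; have hj := ltn_ord j.
  case/or4P: hb => /andP[].
  - move=> h1 h2; apply/existsP; exists (inord x.+1, j).
    by rewrite /nbr /= !inordK // adj_right.
  - move=> h1 h2; apply/existsP; exists (inord x.-1, j).
    rewrite /nbr /= !inordK ?h2 ?andbT //; last by lia.
    have e : (x : nat) = x.-1.+1 by lia.
    by rewrite [in gvert _ _]e adj_left.
  - move=> /andP[h0 h1] h2; apply/existsP; exists (x, inord j.+1).
    by rewrite /nbr /= !inordK // adj_up.
  - move=> /andP[h0 h1] h2; apply/existsP; exists (x, inord j.-1).
    rewrite /nbr /= !inordK ?h2 ?andbT //; last by lia.
    have e : (j : nat) = j.-1.+1 by lia.
    by rewrite [in gvert _ _]e adj_down.
have mixed_row : forall j, j < M -> (exists2 a, a < M & t a j) ->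
    (exists2 b, b < M & ~~ t b j) -> 1 <= \sum_(x < M) (badn x j : nat).
  move=> j hj [a ha ta] [b hb tb]; case: (ltngtP a b) => hab.
  - have [x [h1 h2 h3 h4]] := ivt (f := fun z => t z j) (ltnW hab) ta tb.
    apply: (sum_ge1 (F := fun x => badn x j) (x0 := x)); first lia.
    rewrite /badn h3 /=; apply/orP; left; rewrite h4 andbT; lia.
  - have [x [h1 h2 h3 h4]] := ivt (f := fun z => ~~ t z j) (ltnW hab) tb ltac:(by rewrite negbK).
    apply: (sum_ge1 (F := fun x => badn x j) (x0 := x.+1)); first lia.
    rewrite /badn (negbNE h4) /=; apply/orP; right; apply/orP; left; exact: h3.
  - by subst b; rewrite ta in tb.
have col : forall x, x < M -> forall j1 j2, j1 < M -> j2 < M -> t x j1 -> ~~ t x j2 ->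
    (~~ odd x && (j1 < j2)) || (odd x && (j2 < j1)) -> 1 <= \sum_(j < M) (badn x j : nat).
  move=> x hx j1 j2 h1 h2 t1 t2 /orP[/andP[ho hj]|/andP[ho hj]].
  - have [j [k1 k2 k3 k4]] := ivt (f := fun z => t x z) (ltnW hj) t1 t2.
    apply: (sum_ge1 (F := fun j => badn x j) (x0 := j)); first lia.
    rewrite /badn k3 /=; apply/orP; right; apply/orP; right; apply/orP; left.
    rewrite ho k4 andbT /=; lia.
  - have [j [k1 k2 k3 k4]] := ivt (f := fun z => ~~ t x z) (ltnW hj) t2 ltac:(by rewrite negbK).
    apply: (sum_ge1 (F := fun j => badn x j) (x0 := j.+1)); first lia.
    rewrite /badn (negbNE k4) /=; apply/orP; right; apply/orP; right; apply/orP; right.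
    by rewrite ho k3.
pose full j := [forall x : 'I_M, t x j].
pose empt j := [forall x : 'I_M, ~~ t x j].
have hBj : B = \sum_(j < M) \sum_(x < M) (badn x j : nat) by rewrite /B exchange_big.
have hmix : \sum_(j < M) (~~ full j && ~~ empt j : nat) <= B.
  rewrite hBj; apply: leq_sum => j _.
  case: (boolP (~~ full j && ~~ empt j)) => // /andP[/forallPn[b hb] /forallPn[a ha]].
  apply: mixed_row => //; [by exists a => //; rewrite -(negbK (t a j)) | by exists b].
have hTsum : #|T| = \sum_(j < M) \sum_(x < M) (t x j : nat).
  have -> : T = [set d : 'I_M * 'I_M | t d.1 d.2].
    by apply/setP => -[x j]; rewrite inE /t /= !inord_val.
  by rewrite card_pairs exchange_big.
have rle : forall j, \sum_(x < M) (t x j : nat) <= M.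
  move=> j; apply: leq_trans (_ : \sum_(x < M) 1 <= M); last by rewrite sum1_card card_ord.
  by apply: leq_sum => x _; case: (t x j).
suff : M./2 <= B by lia.
case: (boolP [exists j : 'I_M, empt j]) => hE; last first.
  have hF : M * \sum_(j < M) (full j : nat) <= M * M./2.
    rewrite -hT hTsum big_distrr; apply: leq_sum => j _.
    case: (boolP (full j)) => hf /=; rewrite ?muln0 ?muln1 //.
    apply: leq_trans (_ : \sum_(x < M) 1 <= _); first by rewrite sum1_card card_ord.
    by apply: leq_sum => x _; rewrite (forallP hf x).
  rewrite leq_pmul2l // in hF.
  have hsplit : \sum_(j < M) (~~ full j && ~~ empt j : nat) + \sum_(j < M) (full j : nat) = M.
    rewrite -big_split /=; rewrite -[RHS](card_ord M) -sum1_card; apply: eq_bigr => j _.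
    have hej : ~~ empt j by apply: contra hE => h; apply/existsP; exists j.
    by rewrite hej andbT; case: (full j).
  lia.
case: (boolP [exists j : 'I_M, full j]) => hF; last first.
  have hN : M * M./2 <= M * \sum_(j < M) (~~ full j && ~~ empt j : nat).
    rewrite -hT hTsum big_distrr; apply: leq_sum => j _.
    have hfj : ~~ full j by apply: contra hF => h; apply/existsP; exists j.
    rewrite hfj /=; case: (boolP (empt j)) => he /=; rewrite ?muln0 ?muln1 //.
    by rewrite big1 // => x _; rewrite (negbTE (forallP he x)).
  rewrite leq_pmul2l // in hN; lia.
case/existsP: hE => j2 e2; case/existsP: hF => j1 f1.
case: (ltngtP j1 j2) => hj.
- apply: leq_trans (_ : \sum_(x < M) (~~ odd x : nat) <= B); first by rewrite sum_even; lia.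
  apply: leq_sum => x _; case: (boolP (odd x)) => ho //=.
  apply: (col x (ltn_ord x) j1 j2) => //; [exact: (forallP f1 x) | exact: (forallP e2 x) | by rewrite ho hj].
- apply: leq_trans (_ : \sum_(x < M) (odd x : nat) <= B); first by rewrite sum_odd.
  apply: leq_sum => x _; case: (boolP (odd x)) => ho //=.
  apply: (col x (ltn_ord x) j1 j2) => //; [exact: (forallP f1 x) | exact: (forallP e2 x) | by rewrite ho hj orbT].
- have h1 := forallP f1 ord0; have h2 := forallP e2 ord0.
  have e : j1 = j2 by apply: val_inj.
  by subst j2; rewrite h1 in h2.
Qed.
End Comb.

Lemma cardCD1 (T : finType) (o : {set T}) s : s \in o -> #|~: (o :\ s)| = #|~: o|.+1.
Proof.
move=> hs.
have c1 := cardsC o; have c2 := cardsC (o :\ s); have c3 := cardsD1 s o.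
rewrite hs /= in c3. lia.
Qed.

Section Run.
Variables (Pose : Type) (ov : Pose -> Pose -> Prop) (n : nat).
Variables (st gl : 'I_n -> Pose).

Definition Inv (s : state n) : Prop :=
  buf s + #|filled s| = #|~: occ s| /\
  (forall g, g \in filled s -> forall i, ov (st i) (gl g) -> i \notin occ s).

Lemma step_inv s a s' : step ov st gl s a s' -> Inv s ->
  Inv s' /\ #|~: occ s'| <= #|~: occ s|.+1.
Proof.
case=> {s a s'}.
- move=> o f b s g hs hg h1 h2 [/= e hi]; rewrite /Inv /=.
  rewrite (cardCD1 hs) cardsU1 hg /=.
  split; [split; [lia|] | lia].
  move=> g'; rewrite in_setU1 => /orP[/eqP -> | hg'] i hov; rewrite in_setD1 negb_and negbK.
  + case: (eqVneq i s) => //= his; apply/negP => hio; exact: (h1 i hio his hov).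
  + by rewrite (hi g' hg' i hov) orbT.
- move=> o f b s hs [/= e hi]; rewrite /Inv /=.
  rewrite (cardCD1 hs).
  split; [split; [by rewrite addSn e|] | exact: ltnSn].
  move=> g hg i hov; rewrite in_setD1 negb_and (hi g hg i hov) orbT //.
- move=> o f b g hb hg h1 h2 [/= e hi]; rewrite /Inv /=.
  rewrite cardsU1 hg /=.
  split; [split; [lia|] | lia].
  move=> g'; rewrite in_setU1 => /orP[/eqP -> | hg'] i hov.
  + by apply/negP => hio; exact: (h1 i hio hov).
  + exact: (hi g' hg' i hov).
Qed.

Lemma run_last s p tr : run ov st gl s p tr -> Inv s -> Inv (last s tr).
Proof.
elim=> {s p tr} // s a s' p tr hst _ IH hI /=.
exact: IH (step_inv hst hI).1.
Qed.

Lemma run_ivt s p tr k : run ov st gl s p tr -> Inv s ->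
  #|~: occ s| < k <= #|~: occ (last s tr)| ->
  exists s', [/\ List.In s' tr, Inv s' & #|~: occ s'| = k].
Proof.
elim=> {s p tr} /=.
  move=> s _ /andP[h1 h2]; lia.
move=> s a s' p tr hst _ IH hI /andP[h1 h2].
have [hI' hc] := step_inv hst hI.
case: (eqVneq #|~: occ s'| k) => e.
  by exists s'; split => //; left.
have hlt : #|~: occ s'| < k.
  rewrite ltn_neqAle e /=; exact: leq_trans hc h1.
have [s'' [h3 h4 h5]] := IH hI' (ltac:(by apply/andP; split)).
by exists s''; split => //; right.
Qed.

Lemma max_ge (s : state n) (tr : seq (state n)) : List.In s tr -> buf s <= max_running tr.
Proof.
rewrite /max_running; elim: tr => [//|s0 tr IH] /= [-> | h]; rewrite big_cons.
  exact: leq_maxl.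
exact: leq_trans (IH h) (leq_maxr _ _).
Qed.
End Run.

Lemma main_nat (m' : nat) (Pose : Type) (ov : Pose -> Pose -> Prop)
  (st gl : 'I_(m'.+1 ^ 2) -> Pose) :
  0 < m' -> dep_graph_iso_grid ov st gl m'.+1 (2 * m'.+1) ->
  forall p tr, valid_plan ov st gl p tr -> m'.+1./2 <= max_running tr.
Proof.
move=> hm [fs [fg [[fsi fgi fsg fgg] [fss fgs hov]]]] p tr [hrun hlast].
pose k := m'.+1 * m'.+1./2.
have hI0 : Inv ov st gl (init_state _).
  split => /=; first by rewrite setCT !cards0.
  by move=> g; rewrite inE.
have hIl := run_last hrun hI0.
have hk : #|~: occ (init_state (m'.+1 ^ 2))| < k <= #|~: occ (last (init_state _) tr)|.
  apply/andP; split; first by rewrite /= setCT cards0 /k muln_gt0 /=; lia.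
  move: hIl => [e _]; rewrite hlast cardsT card_ord in e.
  rewrite -e /k; apply: leq_trans (leq_addl _ _).
  rewrite expnS expn1 leq_mul2l; apply/orP; right; lia.
have [s [hin [e hinv] hks]] := run_ivt hrun hI0 hk.
apply: leq_trans (max_ge hin).
pose phi (i : 'I_(m'.+1 ^ 2)) : 'I_m'.+1 * 'I_m'.+1 :=
  (inord (fs i).1.-1, inord ((fs i).2.-1)./2).
pose psi (i : 'I_(m'.+1 ^ 2)) : 'I_m'.+1 * 'I_m'.+1 :=
  (inord (fg i).1.-1, inord ((fg i).2.-1)./2).
have hphi : forall i, fs i = svert (phi i).1 (phi i).2.
  move=> i; have /andP[g1 g2] := fsg i; have [E h1 h2] := start_svert g1 g2.
  by rewrite /phi /= !inordK.
have hpsi : forall i, fg i = gvert (psi i).1 (psi i).2.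
  move=> i; have /andP[g1 g2] := fgg i; have [E h1 h2] := goal_gvert g1 g2.
  by rewrite /psi /= !inordK.
have phi_inj : injective phi.
  by move=> i i' ei; apply: fsi; rewrite hphi ei -hphi.
have psi_inj : injective psi.
  by move=> i i' ei; apply: fgi; rewrite hpsi ei -hpsi.
have surj : forall d, exists i, phi i = d.
  move=> [x j]; have /andP[g1 g2] := svert_grid (ltn_ord x) (ltn_ord j).
  have [i hi] := fss _ g1 g2; exists i.
  have := hphi i; rewrite hi => /svert_inj [e1 e2].
  by congr pair; apply: val_inj.
pose TS := phi @: ~: occ s.
pose TF := psi @: filled s.
have cTS : #|TS| = k by rewrite card_imset.
have cTF : #|TF| = #|filled s| by rewrite card_imset.
have sub : TF \subset TS.
  apply/subsetP => d /imsetP [j hj ->]; have [i hi] := surj (psi j).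
  have hadj : ov (st i) (gl j) by apply/hov; rewrite hphi hpsi hi; exact: adj_same.
  rewrite -hi; apply: imset_f; rewrite inE; exact: hinv j hj i hadj.
have bad_sub : [set d in TS | [exists d', nbr d d' && (d' \notin TS)]] \subset TS :\: TF.
  apply/subsetP => d; rewrite !inE => /andP[hd /existsP[d' /andP[hn hd']]]; rewrite hd andbT.
  apply/negP => /imsetP[j hj ed]; have [i' hi'] := surj d'.
  have hadj : ov (st i') (gl j).
    by apply/hov; rewrite hphi hpsi hi' -ed grid_adj_sym; exact: hn.
  apply: (negP hd'); rewrite -hi'; apply: imset_f; rewrite inE; exact: hinv j hj i' hadj.
have hc := comb cTS.
have hsub := subset_leq_card bad_sub.
rewrite cardsD (setIidPr sub) cTS cTF in hsub.
rewrite -hks -e addnK in hsub.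
exact: leq_trans hc hsub.
Qed.

Section RealPart.
Local Open Scope R_scope.
Definition quarter : R := / 4.
Lemma real_fin (a b : nat) : (a <= 4 * b)%coq_nat -> Rmult quarter (INR a) <= INR b.
Proof.
move=> /le_INR; rewrite mult_INR /quarter.
have -> : INR 4 = 4 by simpl; lra.
lra.
Qed.
Lemma quarter_pos : 0 < quarter.
Proof. rewrite /quarter; lra. Qed.
End RealPart.

Theorem lemma2 :
  exists (c : R) (m0 : nat), Rlt 0 c /\
    forall m : nat, m0 <= m ->
    forall (Pose : Type) (ov : Pose -> Pose -> Prop)
           (st gl : 'I_(m ^ 2) -> Pose),
      (forall p q, ov p q -> ov q p) ->
      feasible ov st -> feasible ov gl ->
      dep_graph_iso_grid ov st gl m (2 * m) ->
      MRB_ge ov st gl (Rmult c (INR m)).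
Proof.
exists quarter, 2; split; first exact: quarter_pos.
move=> m hm Pose ov st gl _ _ _ hiso p tr hv.
case: m hm st gl hiso p tr hv => [//|m'] hm st gl hiso p tr hv.
have h := main_nat (ltac:(lia) : 0 < m') hiso hv.
have h4 : m'.+1 <= 4 * max_running tr by lia.
move/leP: h4 => h4.
exact: real_fin h4.
Qed.
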